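(* Let $G_1,G_2$ be two connected graphs that are cospectral with respect to the Laplacian matrix. If $Z(G_1)\neq Z(G_2)$, then for every $r\geq 1$ the joins $G_1\vee K_r$ and $G_2\vee K_r$ are cospectral with respect to the Laplacian matrix and satisfy $Z(G_1\vee K_r)\neq Z(G_2\vee K_r)$. Likewise, if $Z_{-}(G_1)\neq Z_{-}(G_2)$, then for every $r\geq 1$ the joins $G_1\vee K_r$ and $G_2\vee K_r$ are Laplacian-cospectral and satisfy $Z_{-}(G_1\vee K_r)\neq Z_{-}(G_2\vee K_r)$.
   Context: Graphs are finite, simple, undirected. The Laplacian matrix of $G$ is $L=D-A$, with $D$ the diagonal degree matrix and $A$ the adjacency matrix; graphs are Laplacian-cospectral if their Laplacian matrices have the same multiset of eigenvalues. The join $G\vee H$ is the disjoint union of $G$ and $H$ together with all edges $\{u,v\}$, $u\in V(G)$, $v\in V(H)$. $K_r$ is the complete graph on $r$ vertices. The zero forcing number $Z(G)$ is the minimum size of a set $S\subseteq V(G)$ such that, if the vertices of $S$ are colored blue and all others white, repeated application of the rule ''a blue vertex with exactly one white neighbor forces that neighbor to become blue'' eventually makes every vertex blue. The skew zero forcing number $Z_{-}(G)$ is defined in the same way but with the rule ''any vertex (blue or white) that has exactly one white neighbor forces that neighbor to become blue''. *)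

(* Defs.v *)
From HB Require Import structures.
From mathcomp Require Import all_boot all_order all_algebra all_field.
Set Implicit Arguments. Unset Strict Implicit. Unset Printing Implicit Defensive.
Import GRing.Theory Num.Theory.
Local Open Scope ring_scope.

Definition simple_graph n (G : rel 'I_n) : Prop :=
  symmetric G /\ irreflexive G.

Definition connected_graph n (G : rel 'I_n) : Prop :=
  forall u v : 'I_n, connect G u v.

Definition laplacian n (G : rel 'I_n) : 'M[algC]_n :=
  \matrix_(i, j)
    (if i == j then (#|[set k | G i k]|)%:R else - ((G i j : nat)%:R)).

(* Laplacian-cospectral: same number of vertices and the same multiset of
   Laplacian eigenvalues (eigenvalues counted with algebraic multiplicity,
   i.e. multiplicity as roots of the characteristic polynomial). *)
Definition L_cospectral n1 n2 (G1 : rel 'I_n1) (G2 : rel 'I_n2) : Prop :=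
  n1 = n2 /\
  forall x : algC, mup x (char_poly (laplacian G1)) = mup x (char_poly (laplacian G2)).

(* Complete graph K_r on 'I_r and the join G \/ K_r on 'I_(n + r):
   vertices lshift = vertices of G, rshift = vertices of K_r. *)
Definition complete_graph r : rel 'I_r := fun a b => a != b.

Definition join_complete n (G : rel 'I_n) r : rel 'I_(n + r) :=
  fun u v =>
    match split u, split v with
    | inl a, inl b => G a b
    | inr a, inr b => complete_graph a b
    | _, _ => true
    end.

Arguments join_complete {n} G r.

Definition white_nbrs (T : finType) (G : rel T) (B : {set T}) (u : T) : {set T} :=
  [set w | G u w & w \notin B].

(* One round applying every available force of the standard rule
   (a blue vertex with exactly one white neighbour forces it). *)
Definition zf_step (T : finType) (G : rel T) (B : {set T}) : {set T} :=
  B :|: [set w | [exists u, (u \in B) && (white_nbrs G B u == [set w])]].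

Definition szf_step (T : finType) (G : rel T) (B : {set T}) : {set T} :=
  B :|: [set w | [exists u, white_nbrs G B u == [set w]]].

(* Final colouring: iterate until stable (#|T| rounds suffice). *)
Definition zf_closure (T : finType) (G : rel T) (S : {set T}) :=
  iter #|T| (zf_step G) S.
Definition szf_closure (T : finType) (G : rel T) (S : {set T}) :=
  iter #|T| (szf_step G) S.

Definition zero_forcing_set (T : finType) (G : rel T) (S : {set T}) : bool :=
  zf_closure G S == setT.
Definition skew_zero_forcing_set (T : finType) (G : rel T) (S : {set T}) : bool :=
  szf_closure G S == setT.

Definition Z (T : finType) (G : rel T) : nat :=
  \big[minn/#|T|]_(S : {set T} | zero_forcing_set G S) #|S|.
Definition Zskew (T : finType) (G : rel T) : nat :=
  \big[minn/#|T|]_(S : {set T} | skew_zero_forcing_set G S) #|S|.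

(* Main.v *)
Require Import Defs.
From HB Require Import structures.
From mathcomp Require Import all_boot all_order all_algebra all_field.
From mathcomp Require Import zify.
From Stdlib Require Import FunctionalExtensionality.
Set Implicit Arguments. Unset Strict Implicit. Unset Printing Implicit Defensive.

Module LinAlg.
Import GRing.Theory Num.Theory.
Local Open Scope ring_scope.

Section LA.
Variable F : fieldType.

Lemma mul_const_mx m k p (a b : F) :
  (const_mx a : 'M_(m,k)) *m (const_mx b : 'M_(k,p)) = const_mx (a * b *+ k).
Proof.
apply/matrixP=> i j; rewrite !mxE.
under eq_bigr do rewrite !mxE.
by rewrite sumr_const card_ord.
Qed.

Lemma mul_mx_const m k p (M : 'M[F]_(m,k)) c (b : F) :
  (forall i, \sum_l M i l = c) -> M *m (const_mx b : 'M_(k,p)) = const_mx (c * b).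
Proof.
move=> HM; apply/matrixP=> i j; rewrite !mxE.
under eq_bigr do rewrite !mxE.
by rewrite -mulr_suml HM.
Qed.

Lemma add_const_mx m k (a b : F) :
  (const_mx a : 'M_(m,k)) + const_mx b = const_mx (a + b).
Proof. by apply/matrixP=> i j; rewrite !mxE. Qed.

Lemma det_rank1 n (A : 'M[F]_n) a e :
  (forall i, \sum_j A i j = a) -> a != 0 ->
  \det (A + const_mx e) = (1 + e * n%:R / a) * \det A.
Proof.
move=> HA a0.
pose Z := block_mx (1%:M : 'M_1) (const_mx (-e) : 'M_(1,n))
                   (const_mx 1 : 'M_(n,1)) A.
have E1 : block_mx (1%:M : 'M_1) 0 (const_mx 1 : 'M_(n,1)) 1%:M *m
          block_mx (1%:M : 'M_1) (const_mx (-e)) 0 (A + const_mx e) = Z.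
  rewrite mulmx_block !mulmx1 !mul1mx !mulmx0 !mul0mx !addr0 ?add0r.
  rewrite mul_const_mx mul1r mulr1n addrCA add_const_mx addNr.
  have -> : (const_mx 0 : 'M[F]_n) = 0 by apply/matrixP=> i j; rewrite !mxE.
  by rewrite addr0.
pose t := - a^-1.
have E2 : Z *m block_mx (1%:M : 'M_1) 0 (const_mx t : 'M_(n,1)) 1%:M =
          block_mx (1%:M + const_mx (- e * t *+ n)) (const_mx (-e)) 0 A.
  rewrite mulmx_block !mulmx1 !mul1mx ?mulmx0 ?mul0mx ?addr0.
  rewrite mul_const_mx (mul_mx_const _ _ HA) add_const_mx.
  rewrite sub0r add0r add_const_mx; congr block_mx; apply/matrixP=> i j; rewrite !mxE /t.
  by rewrite mulrN divff // subrr.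
  idtac.
have := congr1 determinant E2.
rewrite det_mulmx det_lblock !det1 !mulr1 det_ublock det_mx11 !mxE /=.
rewrite -E1 det_mulmx det_lblock det_ublock !det1 !mul1r => ->.
congr (_ * _); rewrite /t mulNr mulrN opprK.
by rewrite -mulr_natr mulrAC.
Qed.

Lemma det_schur n r (A : 'M[F]_n) (D : 'M[F]_r) a d :
  (forall i, \sum_j A i j = a) -> (forall k, \sum_j D k j = d) ->
  a != 0 -> d != 0 ->
  \det (block_mx A (const_mx 1) (const_mx 1) D) =
    (1 + (- d^-1 *+ r) * n%:R / a) * \det A * \det D.
Proof.
move=> HA HD a0 d0.
pose E : 'M_(r,n) := const_mx (- d^-1).
have E1 : block_mx A (const_mx 1) (const_mx 1) D *m block_mx 1%:M 0 E 1%:M =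
          block_mx (A + const_mx (- d^-1 *+ r)) (const_mx 1) 0 D.
  rewrite mulmx_block !mulmx1 !mulmx0 !add0r.
  rewrite /E mul_const_mx mul1r (mul_mx_const _ _ HD) add_const_mx.
  congr block_mx; apply/matrixP=> i j; rewrite !mxE.
  by rewrite mulrN divff // subrr.
have := congr1 determinant E1.
rewrite det_mulmx det_lblock !det1 !mulr1 det_ublock => ->.
rewrite (det_rank1 _ HA a0) //.
Qed.
End LA.

Lemma split_lshift m n (i : 'I_m) : split (lshift n i) = inl i.
Proof. exact: (unsplitK (inl i)). Qed.
Lemma split_rshift m n (i : 'I_n) : split (rshift m i) = inr i.
Proof. exact: (unsplitK (inr i)). Qed.

Section Join.
Variables (n r : nat) (G : rel 'I_n).
Local Notation J := (join_complete G r).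

Lemma join_ll a b : J (lshift r a) (lshift r b) = G a b.
Proof. by rewrite /join_complete !split_lshift. Qed.
Lemma join_lr a k : J (lshift r a) (rshift n k) = true.
Proof. by rewrite /join_complete split_lshift split_rshift. Qed.
Lemma join_rl a k : J (rshift n k) (lshift r a) = true.
Proof. by rewrite /join_complete split_lshift split_rshift. Qed.
Lemma join_rr k l : J (rshift n k) (rshift n l) = (k != l).
Proof. by rewrite /join_complete !split_rshift. Qed.

Lemma join_irr : irreflexive G -> irreflexive J.
Proof.
move=> irr v; case: (split_ordP v) => [a|k] ->.
  by rewrite join_ll irr.
by rewrite join_rr eqxx.
Qed.

Lemma join_sym : symmetric G -> symmetric J.
Proof.
move=> sym u v.
case: (split_ordP u) => [a|k] ->; case: (split_ordP v) => [b|l] ->;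
  by rewrite ?join_ll ?join_lr ?join_rl ?join_rr // ?sym // eq_sym.
Qed.

Lemma deg_join_l a :
  #|[set v | J (lshift r a) v]| = (#|[set b | G a b]| + r)%N.
Proof.
rewrite -!sum1dep_card big_split_ord /=.
under [X in (_ + X)%N]eq_bigl do rewrite join_lr.
under eq_bigl do rewrite join_ll.
by rewrite big_const_ord iter_addn_0 mul1n.
Qed.
End Join.

Lemma join_r_indep n r (G1 G2 : rel 'I_n) k v :
  join_complete G1 r (rshift n k) v = join_complete G2 r (rshift n k) v.
Proof. by rewrite /join_complete split_rshift. Qed.

Lemma deg_sum n (G : rel 'I_n) i :
  (#|[set k | G i k]|)%:R = \sum_j ((G i j : nat)%:R : algC).
Proof.
rewrite -sum1dep_card natr_sum big_mkcond /=.
by apply: eq_bigr => j _; case: (G i j).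
Qed.

Lemma lap_rowsum n (G : rel 'I_n) i : irreflexive G -> \sum_j laplacian G i j = 0.
Proof.
move=> irr; rewrite (bigD1 i) //= !mxE eqxx deg_sum (bigD1 i) //= irr add0r.
rewrite -big_split /=; apply: big1 => j ji.
by rewrite /laplacian !mxE eq_sym (negbTE ji) subrr.
Qed.

Lemma rowsum_scalar_sub m (c : algC) (L : 'M[algC]_m) i :
  \sum_j L i j = 0 -> \sum_j (c%:M - L) i j = c.
Proof.
move=> H; under eq_bigr do rewrite !mxE.
rewrite big_split /= sumrN H subr0 (bigD1 i) //= eqxx mulr1n big1 ?addr0 //.
by move=> j /negbTE; rewrite eq_sym => ->.
Qed.

Lemma char_poly_eval n (M : 'M[algC]_n) y : (char_poly M).[y] = \det (y%:M - M).
Proof.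
rewrite /char_poly -horner_evalE -det_map_mx; congr (\det _).
apply/matrixP=> i j; rewrite !mxE; rewrite [LHS](_ : _ = ('X *+ (i == j) - (M i j)%:P).[y]) // hornerD hornerN hornerC.
by rewrite hornerMn hornerX.
Qed.

Section Sub.
Variables (R : Type) (m1 m2 : nat) (A : 'M[R]_(m1 + m2)).
Lemma ul_entry i j : ulsubmx A i j = A (lshift m2 i) (lshift m2 j).
Proof. by rewrite !mxE. Qed.
Lemma ur_entry i j : ursubmx A i j = A (lshift m2 i) (rshift m1 j).
Proof. by rewrite !mxE. Qed.
Lemma dl_entry i j : dlsubmx A i j = A (rshift m1 i) (lshift m2 j).
Proof. by rewrite !mxE. Qed.
Lemma dr_entry i j : drsubmx A i j = A (rshift m1 i) (rshift m1 j).
Proof. by rewrite !mxE. Qed.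
End Sub.

Section JoinLap.
Variables (n r : nat) (G : rel 'I_n) (y : algC).
Local Notation J := (join_complete G r).
Local Notation Xm := (y%:M - laplacian J).

Lemma Xm_ul : ulsubmx Xm = (y - r%:R)%:M - laplacian G.
Proof.
apply/matrixP=> a b; rewrite ul_entry !mxE eq_lshift.
case: eqP => [->|_]; last by rewrite join_ll !mulr0n.
by rewrite deg_join_l natrD !mulr1n opprD addrA addrAC.
Qed.

Lemma Xm_ur : ursubmx Xm = const_mx 1.
Proof.
by apply/matrixP=> a b; rewrite ur_entry !mxE eq_lrshift join_lr mulr0n sub0r opprK.
Qed.

Lemma Xm_dl : dlsubmx Xm = const_mx 1.
Proof.
by apply/matrixP=> a b; rewrite dl_entry !mxE eq_rlshift join_rl mulr0n sub0r opprK.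
Qed.

Lemma Xm_dr_sum : irreflexive G -> forall k, \sum_j drsubmx Xm k j = y - n%:R.
Proof.
move=> irr k.
have := rowsum_scalar_sub y (lap_rowsum (rshift n k) (join_irr irr)).
rewrite big_split_ord /=.
under eq_bigr do rewrite -dl_entry Xm_dl mxE.
rewrite sumr_const card_ord.
have -> : \sum_j drsubmx Xm k j = \sum_(i < r) Xm (rshift n k) (rshift n i).
  by apply: eq_bigr => j _; rewrite dr_entry.
move/(congr1 (fun z => - n%:R + z)); rewrite addKr => ->.
by rewrite addrC.
Qed.
End JoinLap.

Lemma Xm_dr n r (G1 G2 : rel 'I_n) (y : algC) :
  drsubmx (y%:M - laplacian (join_complete G1 r)) =
  drsubmx (y%:M - laplacian (join_complete G2 r)).
Proof.
apply/matrixP=> a b; rewrite !dr_entry !mxE.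
case: eqP => _; last by rewrite (@join_r_indep n r G1 G2).
by rewrite (eq_card (B := [set v | join_complete G2 r (rshift n a) v])) // => v; rewrite !inE (@join_r_indep n r G1 G2).
Qed.

Lemma join_eval n r (G1 G2 : rel 'I_n) (y : algC) :
  irreflexive G1 -> irreflexive G2 ->
  char_poly (laplacian G1) = char_poly (laplacian G2) ->
  y != r%:R -> y != n%:R ->
  (char_poly (laplacian (join_complete G1 r))).[y] =
  (char_poly (laplacian (join_complete G2 r))).[y].
Proof.
move=> i1 i2 Hc yr yn; rewrite !char_poly_eval.
rewrite -[y%:M - laplacian (join_complete G1 r)]submxK.
rewrite -[y%:M - laplacian (join_complete G2 r)]submxK.
rewrite !Xm_ul !Xm_ur !Xm_dl (@Xm_dr n r G2 G1).
have a0 : y - r%:R != 0 by rewrite subr_eq0.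
have d0 : y - n%:R != 0 by rewrite subr_eq0.
have HD := @Xm_dr_sum n r G1 y i1.
have HA1 : forall i, \sum_j ((y - r%:R)%:M - laplacian G1) i j = y - r%:R.
  by move=> i; rewrite rowsum_scalar_sub // lap_rowsum.
have HA2 : forall i, \sum_j ((y - r%:R)%:M - laplacian G2) i j = y - r%:R.
  by move=> i; rewrite rowsum_scalar_sub // lap_rowsum.
rewrite (det_schur HA1 HD a0 d0) (det_schur HA2 HD a0 d0).
by rewrite -!char_poly_eval Hc.
Qed.

Lemma poly_eq_nat (p q : {poly algC}) K :
  (forall m, (K <= m)%N -> p.[m%:R] = q.[m%:R]) -> p = q.
Proof.
move=> H; apply/eqP; rewrite -subr_eq0; apply/negPn/negP => nz.
pose rs := [seq ((K + i)%N%:R : algC) | i <- iota 0 (size (p - q))].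
have H1 : all (root (p - q)) rs.
  apply/allP => x /mapP [i _ ->].
  by rewrite /root hornerD hornerN (H (K + i)%N) ?leq_addr // subrr.
have H2 : uniq rs.
  rewrite map_inj_uniq ?iota_uniq // => i j /eqP.
  by rewrite eqr_nat eqn_add2l => /eqP.
have := max_poly_roots nz H1 H2.
by rewrite size_map size_iota ltnn.
Qed.

Lemma mup_eq_poly (p q : {poly algC}) :
  p \is monic -> q \is monic -> (forall x, mup x p = mup x q) -> p = q.
Proof.
move=> mp mq H.
have [s Hs] := closed_field_poly_normal p.
have [t Ht] := closed_field_poly_normal q.
move: Hs Ht; rewrite (monicP mp) (monicP mq) !scale1r => Hs Ht.
rewrite Hs Ht; apply: perm_big; apply/allP => x _ /=; apply/eqP.
by rewrite -!mu_prod_XsubC -Hs -Ht.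
Qed.

Lemma join_cospectral n1 n2 r (G1 : rel 'I_n1) (G2 : rel 'I_n2) :
  irreflexive G1 -> irreflexive G2 -> L_cospectral G1 G2 ->
  L_cospectral (join_complete G1 r) (join_complete G2 r).
Proof.
move=> i1 i2 [e12 Hm]; subst n2; split=> // x.
suff -> : char_poly (laplacian (join_complete G1 r)) =
          char_poly (laplacian (join_complete G2 r)) by [].
have Hc : char_poly (laplacian G1) = char_poly (laplacian G2).
  by apply: mup_eq_poly => //; apply: char_poly_monic.
apply: (@poly_eq_nat _ _ (n1 + r).+1) => m Hm'.
apply: join_eval => //; rewrite eqr_nat; apply/eqP => E; subst m.
  by move: Hm'; rewrite ltnNge leq_addl.
by move: Hm'; rewrite ltnNge leq_addr.
Qed.

End LinAlg.
Import LinAlg.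


Section Closure.
Variables (T : finType) (f : {set T} -> {set T}).
Implicit Types B C S : {set T}.
Hypothesis ext : forall B : {set T}, B \subset f B.
Hypothesis mono : forall B C : {set T}, B \subset C -> f B \subset f C.

Lemma iter_ext S k : S \subset iter k f S.
Proof.
elim: k => [|k IH] /=; first exact: subxx.
exact: subset_trans IH (ext _).
Qed.

Lemma iter_stable S : f (iter #|T| f S) = iter #|T| f S.
Proof.
have H : forall k, f (iter k f S) = iter k f S \/ k <= #|iter k f S|.
  elim=> [|k [IH|IH]]; [by right| by left; rewrite /= IH |].
  have [E|NE] := eqVneq (f (iter k f S)) (iter k f S); first by left; rewrite /= E.
  right; rewrite /=; apply: leq_ltn_trans IH _; apply: proper_card.
  by rewrite properEneq eq_sym NE ext.
have [//|Hc] := H #|T|.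
have E : iter #|T| f S = setT.
  by apply/eqP; rewrite eqEcard subsetT cardsT.
by rewrite E; apply/eqP; rewrite eqEcard subsetT /= subset_leq_card // ext.
Qed.

Lemma closure_char S :
  (iter #|T| f S == setT) <-> (forall B : {set T}, S \subset B -> f B \subset B -> B = setT).
Proof.
split.
  move=> /eqP H B SB fB; apply/eqP; rewrite -subTset -H.
  elim: #|T| => [|k IH] //=.
  exact: subset_trans (mono IH) fB.
move=> H; apply/eqP; apply: H; first exact: iter_ext.
by rewrite iter_stable.
Qed.
End Closure.

Definition gstep (T : finType) (sk : bool) (G : rel T) (B : {set T}) : {set T} :=
  B :|: [set w | [exists u, (sk || (u \in B)) && (white_nbrs G B u == [set w])]].

Definition stalled (T : finType) (sk : bool) (G : rel T) (B : {set T}) :=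
  forall u w, sk || (u \in B) -> white_nbrs G B u != [set w].

Definition zfsg (T : finType) (sk : bool) (G : rel T) (S : {set T}) :=
  forall B : {set T}, S \subset B -> stalled sk G B -> B = setT.

Definition Zg (T : finType) (sk : bool) (G : rel T) : nat :=
  \big[minn/#|T|]_(S : {set T} | iter #|T| (gstep sk G) S == setT) #|S|.

Lemma bigmin_le (I : eqType) (r : seq I) (P : pred I) (F : I -> nat) x0 j :
  j \in r -> P j -> \big[minn/x0]_(i <- r | P i) F i <= F j.
Proof.
elim: r => [//|a r IH]; rewrite inE big_cons => /orP [/eqP <- Pj|jr Pj].
  by rewrite Pj geq_minl.
case: (P a); last exact: IH jr Pj.
exact: leq_trans (geq_minr _ _) (IH jr Pj).
Qed.

Section Gen.
Variables (T : finType) (sk : bool) (G : rel T).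
Implicit Types B C S : {set T}.

Lemma gstep_ext B : B \subset gstep sk G B.
Proof. exact: subsetUl. Qed.

Lemma gstep_mono B C : B \subset C -> gstep sk G B \subset gstep sk G C.
Proof.
move=> BC; apply/subsetP => w; rewrite !inE => /orP [wB|].
  by rewrite (subsetP BC w wB).
case/existsP => u /andP [cu /eqP Hw].
have [wC|wC] := boolP (w \in C); first by [].
apply/orP; right; apply/existsP; exists u; apply/andP; split.
  by case/orP: cu => [->//|uB]; rewrite (subsetP BC u uB) orbT.
rewrite eqEsubset; apply/andP; split.
  rewrite -Hw; apply/subsetP => x; rewrite !inE => /andP [-> xC] /=.
  by apply: contra xC; apply: (subsetP BC).
rewrite sub1set !inE wC andbT.
by have := set11 w; rewrite -Hw inE => /andP [].
Qed.

Lemma stalledP B : stalled sk G B <-> gstep sk G B \subset B.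
Proof.
split.
  move=> st; rewrite subUset subxx /=; apply/subsetP => w; rewrite inE.
  case/existsP => u /andP [cu Hw].
  by move: (st u w cu); rewrite Hw.
move=> sub u w cu; apply/eqP => Hw.
have : w \in gstep sk G B.
  by rewrite !inE; apply/orP; right; apply/existsP; exists u; rewrite cu Hw eqxx.
move/(subsetP sub) => wB.
by have := set11 w; rewrite -Hw inE wB andbF.
Qed.

Lemma zfsgP S : (iter #|T| (gstep sk G) S == setT) <-> zfsg sk G S.
Proof.
rewrite (closure_char gstep_ext gstep_mono); split.
  by move=> H B SB st; apply: H => //; apply/stalledP.
by move=> H B SB st; apply: H => //; apply/stalledP.
Qed.

Lemma Zg_le S : zfsg sk G S -> Zg sk G <= #|S|.
Proof.
by move=> /zfsgP H; rewrite /Zg; apply: bigmin_le => //; rewrite mem_index_enum.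
Qed.

Lemma zfsgT : zfsg sk G setT.
Proof. by move=> B; rewrite subTset => /eqP. Qed.

Lemma Zg_ex : exists S, zfsg sk G S /\ #|S| = Zg sk G.
Proof.
rewrite /Zg; apply: (big_ind (fun x => exists S, zfsg sk G S /\ #|S| = x)).
- by exists setT; split; [exact: zfsgT | exact: cardsT].
- move=> x y [S [HS <-]] [S' [HS' <-]].
  case: (leqP #|S| #|S'|) => h.
  by [exists S | exists S'].
  by [exists S | exists S'].
- by move=> S /zfsgP HS; exists S.
Qed.

Lemma zfsg_sup S (S' : {set T}) : zfsg sk G S -> S \subset S' -> zfsg sk G S'.
Proof. by move=> H SS' B S'B; apply: H; apply: subset_trans S'B. Qed.

End Gen.

Lemma Z_Zg (T : finType) (G : rel T) : Z G = Zg false G.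
Proof.
rewrite /Z /Zg; apply: eq_bigl => S; rewrite /zero_forcing_set /zf_closure.
congr (_ == _); apply: eq_iter => B; apply/setP => w; by rewrite !inE.

Qed.

Lemma Zskew_Zg (T : finType) (G : rel T) : Zskew G = Zg true G.
Proof.
rewrite /Zskew /Zg; apply: eq_bigl => S; rewrite /skew_zero_forcing_set /szf_closure.
congr (_ == _); apply: eq_iter => B; apply/setP => w; by rewrite !inE.

Qed.

Lemma not_single (T : finType) (X : {set T}) a b w :
  a \in X -> b \in X -> a != b -> X != [set w].
Proof.
move=> aX bX ab; apply/eqP => E; move: aX bX ab; rewrite E !inE => /eqP -> /eqP ->.
by rewrite eqxx.
Qed.

Lemma zfsg_remove (T : finType) sk (G : rel T) (A : {set T}) u v :
  zfsg sk G A -> (forall y, G u y -> y \in A) -> G u v ->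
  (sk || (u \in A :\ v)) -> zfsg sk G (A :\ v).
Proof.
move=> HA Hu uv cu B AB st; apply: HA => //.
apply/subsetP => y yA; case: (y =P v) => [->|/eqP yv]; last first.
  by apply: (subsetP AB); rewrite !inE yv.
apply/negPn/negP => vB.
have cuB : sk || (u \in B).
  by case/orP: cu => [->//|/(subsetP AB) ->]; rewrite orbT.
move: (st u v cuB); apply/negP/negPn/eqP/setP => a; rewrite !inE.
case: (a =P v) => [->|/eqP av]; first by rewrite uv vB.
case Gua: (G u a) => //=.
have aB : a \in B by apply: (subsetP AB); rewrite !inE av (Hu a Gua).
by rewrite aB.
Qed.

Lemma card_split n r (S : {set 'I_(n + r)}) :
  #|S| = (#|[set a | lshift r a \in S]| + #|[set k | rshift n k \in S]|)%N.
Proof. by rewrite -sum1_card big_split_ord /= !sum1dep_card. Qed.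

Section Graph.
Variables (n : nat) (G : rel 'I_n).
Hypotheses (sym : symmetric G) (irr : irreflexive G)
           (nbr : forall x, exists y, G x y).
Variable x0 : 'I_n.

Lemma G_neq x y : G x y -> x != y.
Proof. by move=> xy; apply/eqP => E; rewrite E irr in xy. Qed.

Lemma Zg_std_bound : Zg false G < n.
Proof.
have [v Hv] := nbr x0.
have H : zfsg false G (setT :\ v).
  refine (zfsg_remove (@zfsgT _ false G) _ Hv _) => //.
  by rewrite !inE G_neq.
have := Zg_le H; have := cardsD1 v [set: 'I_n]; rewrite cardsT card_ord inE.
by move=> E H1; rewrite [in X in _ < X]E /= add1n ltnS.
Qed.

Lemma in_two (B : {set 'I_n}) x y :
  G x y -> (forall a, a \notin B -> (a == x) || (a == y)) -> stalled true G B ->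
  x \in B.
Proof.
move=> xy HB st; apply/negPn/negP => xB.
case yB: (y \in B).
  move: (st y x isT); apply/negP/negPn/eqP/setP => a; rewrite !inE.
  case: (a =P x) => [->|/eqP ax]; first by rewrite sym xy xB.
  rewrite andbC; case aB: (a \in B) => //=.
  by have := HB a; rewrite aB => /(_ isT) /orP [/eqP E|/eqP E];
    [rewrite E eqxx in ax | rewrite -E aB in yB].
move: (st x y isT); apply/negP/negPn/eqP/setP => a; rewrite !inE.
case: (a =P y) => [->|/eqP ay]; first by rewrite xy yB.
rewrite andbC; case aB: (a \in B) => //=.
by have := HB a; rewrite aB => /(_ isT) /orP [/eqP E|/eqP E];
  [rewrite E irr | rewrite E eqxx in ay].
Qed.

Lemma Zg_skew_bound : (Zg true G).+2 <= n.
Proof.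
have [v Hv] := nbr x0.
have H : zfsg true G (setT :\ x0 :\ v).
  move=> B SB st.
  have HB : forall a, a \notin B -> (a == x0) || (a == v).
    move=> a aB; apply/negPn/negP; rewrite negb_or => /andP [a1 a2].
    by have := subsetP SB a; rewrite !inE a1 a2 (negbTE aB) => /(_ isT).
  have x0B := in_two Hv HB st.
  have vB : v \in B.
    apply: (in_two (y := x0)); [by rewrite sym | | exact: st].
    by move=> a /HB; rewrite orbC.
  apply/setP => a; rewrite inE; apply/negPn/negP => aB.
  by case/orP: (HB a aB) => /eqP E; [rewrite E x0B in aB | rewrite E vB in aB].
have := Zg_le H; have := cardsD1 x0 [set: 'I_n]; have := cardsD1 v (setT :\ x0).
rewrite cardsT card_ord !inE eq_sym (G_neq Hv).
rewrite /= !add1n => E1 E2 H1; rewrite [in X in _ < X]E2 E1 !ltnS; exact: H1.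
Qed.
End Graph.

Section JoinZ.
Variables (n r : nat) (G : rel 'I_n).
Hypotheses (sym : symmetric G) (irr : irreflexive G)
           (nbr : forall x, exists y, G x y).
Local Notation J := (join_complete G r).

Lemma Zg_upper sk : Zg sk J <= Zg sk G + r.
Proof.
have [S [HS <-]] := @Zg_ex _ sk G.
pose SJ := [set v : 'I_(n + r) | if split v is inl a then a \in S else true].
have cSJ : #|SJ| = #|S| + r.
  rewrite card_split; congr (_ + _).
    by apply: eq_card => a; rewrite !inE split_lshift.
  rewrite -[X in _ = X]card_ord -cardsT; apply: eq_card => k.
  by rewrite !inE split_rshift.
rewrite -cSJ; apply: Zg_le => B SB st.
pose A := [set a | lshift r a \in B].
have SA : S \subset A.
  apply/subsetP => a aS; rewrite inE; apply: (subsetP SB).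
  by rewrite inE split_lshift.
have KB : forall k, rshift n k \in B.
  by move=> k; apply: (subsetP SB); rewrite inE split_rshift.
have AT : A = setT.
  apply: HS => // u w cu; apply/negP => /eqP Hw.
  have cu' : sk || (lshift r u \in B) by move: cu; rewrite inE.
  move: (st (lshift r u) (lshift r w) cu'); apply/negP/negPn/eqP/setP => v.
  rewrite !inE; case: (split_ordP v) => [a ->|k ->].
    rewrite join_ll eq_lshift.
    by move/setP: Hw => /(_ a); rewrite !inE.
  by rewrite KB andbF eq_rlshift.
apply/setP => v; rewrite inE; case: (split_ordP v) => [a ->|k ->]; last exact: KB.
by move: (in_setT a); rewrite -AT inE.
Qed.

Lemma L2 sk (S : {set 'I_(n + r)}) :
  zfsg sk J S -> (forall k, rshift n k \in S) ->
  zfsg sk G [set a | lshift r a \in S].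
Proof.
move=> HS KS B AB st.
pose B' := [set v : 'I_(n + r) | if split v is inl a then a \in B else true].
have SB' : S \subset B'.
  apply/subsetP => v vS; rewrite inE; case: (split_ordP v) => [a E|//].
  by apply: (subsetP AB); rewrite inE -E.
have inB'l : forall a, (lshift r a \in B') = (a \in B).
  by move=> a; rewrite inE split_lshift.
have inB'r : forall k, (rshift n k \in B') = true.
  by move=> k; rewrite inE split_rshift.
have B'T : B' = setT.
  apply: HS => // u w cu; apply/negP => /eqP Hw.
  have wW : w \in white_nbrs J B' u by rewrite Hw set11.
  have [w' Ew] : exists w', w = lshift r w'.
    move: wW; rewrite inE; case: (split_ordP w) => [a ->|k ->].
      by exists a.
    by rewrite inB'r andbF.
  subst w.
  have Hw' a : (lshift r a \in white_nbrs J B' u) = (lshift r a \in [set lshift r w']) by rewrite Hw.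
  case: (split_ordP u) cu Hw' => [x ->|k ->] cu Hw'.
    have cx : sk || (x \in B) by rewrite -inB'l.
    move: (st x w' cx); apply/negP/negPn/eqP/setP => a.
    by have := Hw' a; rewrite !inE join_ll ?inB'l ?split_lshift /= eq_lshift.
  have [x Hx] := nbr w'.
  have xB : x \in B.
    apply/negPn/negP => xB.
    have := Hw' x; rewrite !inE join_rl ?inB'l ?split_lshift /= xB eq_lshift => /esym /eqP E.
    by rewrite E irr in Hx.
  have cx : sk || (x \in B) by rewrite xB orbT.
  move: (st x w' cx); apply/negP/negPn/eqP/setP => a; rewrite !inE.
  have := Hw' a; rewrite !inE join_rl ?inB'l ?split_lshift /= eq_lshift /= => Ha.
  rewrite -Ha; case aB: (a \in B) => /=; first by rewrite andbF.
  rewrite andbT; move: Ha; rewrite aB /= => /esym/eqP ->; by rewrite sym.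
by apply/setP => a; rewrite inE -inB'l B'T inE.
Qed.
End JoinZ.

Section Lower.
Variables (n r : nat) (G : rel 'I_n).
Hypotheses (sym : symmetric G) (irr : irreflexive G)
           (nbr : forall x, exists y, G x y).
Variable x0 : 'I_n.
Local Notation J := (join_complete G r).

Lemma white_rK (B : {set 'I_(n + r)}) u k :
  u != rshift n k -> rshift n k \notin B -> rshift n k \in white_nbrs J B u.
Proof.
move=> uk kB; rewrite inE kB andbT.
case: (split_ordP u) uk => [x ->|l ->] uk; first by rewrite join_lr.
by rewrite join_rr; apply: contra uk => /eqP ->.
Qed.

Lemma white_rL (B : {set 'I_(n + r)}) k a :
  lshift r a \notin B -> lshift r a \in white_nbrs J B (rshift n k).
Proof. by move=> aB; rewrite inE aB join_rl. Qed.

Lemma white_LL (B : {set 'I_(n + r)}) x a :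
  G x a -> lshift r a \notin B -> lshift r a \in white_nbrs J B (lshift r x).
Proof. by move=> xa aB; rewrite inE aB join_ll xa. Qed.

Lemma one_missing sk (S : {set 'I_(n + r)}) a u :
  zfsg sk J S -> (forall b, b != a -> rshift n b \in S) ->
  (forall y, G u y -> lshift r y \in S) ->
  (sk || (lshift r u \in S)) ->
  (Zg sk G).+1 <= #|[set b | lshift r b \in S]|.
Proof.
move=> HS Ka Hu cu.
set A := [set b | lshift r b \in S].
have HS' : zfsg sk J (rshift n a |: S) := zfsg_sup HS (subsetUr _ _).
have HA : zfsg sk G A.
  have := L2 sym irr nbr HS'.
  have -> : [set b | lshift r b \in rshift n a |: S] = A.
    by apply/setP => b; rewrite !inE eq_lrshift.
  apply => k; rewrite !inE; case: (k =P a) => [->|/eqP ka]; first by rewrite eqxx.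
  by rewrite Ka ?orbT.
have [v uv] := nbr u.
have vA : v \in A by rewrite inE Hu.
have cu' : sk || (u \in A :\ v).
  by rewrite !inE (G_neq irr uv) /=.
have HuA : forall y, G u y -> y \in A by move=> y h; rewrite inE Hu.
have := Zg_le (zfsg_remove HA HuA uv cu').
by rewrite [#|A|](cardsD1 v) vA add1n ltnS.
Qed.
Lemma Zg_lower_std : Zg false G + r <= Zg false J.
Proof.
have [S [HS <-]] := @Zg_ex _ false J.
set A := [set a | lshift r a \in S]; set C := [set k | rshift n k \in S].
rewrite (card_split S) -/A -/C.
have [allK|] := boolP [forall k, rshift n k \in S].
  have HA := L2 sym irr nbr HS (fun k => forallP allK k).
  have -> : #|C| = r.
    rewrite -[r in _ = r]card_ord -cardsT; apply: eq_card => k.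
    by rewrite !inE (forallP allK k).
  by rewrite leq_add2r; exact: Zg_le HA.
rewrite negb_forall => /existsP [a aS].
have [/existsP [b /andP [ba bS]]|/existsPn onlya] :=
  boolP [exists b, (b != a) && (rshift n b \notin S)].
  exfalso.
  have st : stalled false J S.
    move=> u w /= uS; apply: (not_single (a := rshift n a) (b := rshift n b)).
    - by refine (white_rK _ aS); apply: contraNneq aS => <-.
    - by refine (white_rK _ bS); apply: contraNneq bS => <-.
    - by rewrite eq_rshift eq_sym.
  by have := HS S (subxx S) st => ST; rewrite ST inE in aS.
have Ka : forall b, b != a -> rshift n b \in S.
  by move=> b ba; have := onlya b; rewrite ba /= => /negPn.
have Cr : r <= #|C|.+1.
  have : [set~ a] \subset C by apply/subsetP => k; rewrite !inE => /Ka.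
  move/subset_leq_card; rewrite cardsC1 card_ord; lia.
suff : (Zg false G).+1 <= #|A| by lia.
have [AT|AnT] := boolP (A == setT).
  by rewrite (eqP AT) cardsT card_ord; exact: (Zg_std_bound irr nbr x0).
have [/existsP [u /andP [uA /forallP Hu]]|/existsPn nex] :=
  boolP [exists u, (u \in A) && [forall y, G u y ==> (y \in A)]].
  apply: (one_missing (u := u) HS Ka) => [y h|]; first by have := Hu y; rewrite h inE.
  by move: uA; rewrite inE.
exfalso.
have [g _ gA] : exists2 g, g \in setT & g \notin A.
  by apply/subsetPn; rewrite subTset.
have st : stalled false J S.
  move=> u w /= uS; case: (split_ordP u) uS => [x ->|k ->] uS.
    have xA : x \in A by rewrite inE.
    have := nex x; rewrite xA /= negb_forall => /existsP [y].
    rewrite negb_imply => /andP [xy yA].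
    apply: (not_single (a := rshift n a) (b := lshift r y)).
    - by refine (white_rK _ aS); rewrite eq_lrshift.
    - by refine (white_LL xy _); rewrite inE in yA.
    - by rewrite eq_rlshift.
  apply: (not_single (a := rshift n a) (b := lshift r g)).
  - by refine (white_rK _ aS); apply: contraNneq aS => <-.
  - by apply: white_rL; rewrite inE in gA.
  - by rewrite eq_rlshift.
by have := HS S (subxx S) st => ST; rewrite ST inE in aS.
Qed.
Lemma Zg_lower_skew : Zg true G + r <= Zg true J.
Proof.
have [S [HS <-]] := @Zg_ex _ true J.
set A := [set a | lshift r a \in S]; set C := [set k | rshift n k \in S].
rewrite (card_split S) -/A -/C.
have [allK|] := boolP [forall k, rshift n k \in S].
  have HA := L2 sym irr nbr HS (fun k => forallP allK k).
  have -> : #|C| = r.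
    rewrite -[r in _ = r]card_ord -cardsT; apply: eq_card => k.
    by rewrite !inE (forallP allK k).
  by rewrite leq_add2r; exact: Zg_le HA.
rewrite negb_forall => /existsP [a aS].
have [/existsP [b /andP [ba bS]]|/existsPn onlya] :=
  boolP [exists b, (b != a) && (rshift n b \notin S)].
  have [/existsP [c /and3P [ca cb cS]]|/existsPn onlyab] :=
    boolP [exists c, [&& c != a, c != b & rshift n c \notin S]].
    exfalso.
    have st : stalled true J S.
      move=> u w _; case: (u =P rshift n a) => [->|/eqP ua].
        apply: (not_single (a := rshift n b) (b := rshift n c)).
        - by refine (white_rK _ bS); rewrite eq_rshift eq_sym.
        - by refine (white_rK _ cS); rewrite eq_rshift eq_sym.
        - by rewrite eq_rshift eq_sym.
      case: (u =P rshift n b) => [->|/eqP ub].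
        apply: (not_single (a := rshift n a) (b := rshift n c)).
        - by refine (white_rK _ aS); rewrite eq_rshift.
        - by refine (white_rK _ cS); rewrite eq_rshift eq_sym.
        - by rewrite eq_rshift eq_sym.
      apply: (not_single (a := rshift n a) (b := rshift n b)).
      - exact: (white_rK ua aS).
      - exact: (white_rK ub bS).
      - by rewrite eq_rshift eq_sym.
    by have := HS S (subxx S) st => ST; rewrite ST inE in aS.
  have Cab : ~: C \subset [set a; b].
    apply/subsetP => k; rewrite !inE => kS.
    by have := onlyab k; rewrite kS andbT negb_and !negbK.
  have Cr : r <= #|C| + 2.
    have := cardsC C; rewrite card_ord => E.
    have := subset_leq_card Cab; rewrite cards2 eq_sym ba; lia.
  have [AT|AnT] := boolP (A == setT).
    rewrite (eqP AT) cardsT card_ord.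
    have := Zg_skew_bound sym irr nbr x0; lia.
  exfalso.
  have [g _ gA] : exists2 g, g \in setT & g \notin A.
    by apply/subsetPn; rewrite subTset.
  have gS : lshift r g \notin S by rewrite inE in gA.
  have st : stalled true J S.
    move=> u w _; case: (u =P rshift n a) => [->|/eqP ua].
      apply: (not_single (a := rshift n b) (b := lshift r g)).
      - by refine (white_rK _ bS); rewrite eq_rshift eq_sym.
      - exact: white_rL.
      - by rewrite eq_rlshift.
    case: (u =P rshift n b) => [->|/eqP ub].
      apply: (not_single (a := rshift n a) (b := lshift r g)).
      - by refine (white_rK _ aS); rewrite eq_rshift.
      - exact: white_rL.
      - by rewrite eq_rlshift.
    apply: (not_single (a := rshift n a) (b := rshift n b)).
    - exact: (white_rK ua aS).
    - exact: (white_rK ub bS).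
    - by rewrite eq_rshift eq_sym.
  by have := HS S (subxx S) st => ST; rewrite ST inE in aS.
have Ka : forall b, b != a -> rshift n b \in S.
  by move=> b ba; have := onlya b; rewrite ba /= => /negPn.
have Cr : r <= #|C|.+1.
  have : [set~ a] \subset C by apply/subsetP => k; rewrite !inE => /Ka.
  move/subset_leq_card; rewrite cardsC1 card_ord; lia.
suff : (Zg true G).+1 <= #|A| by lia.
have [le1|gt1] := leqP #|~: A| 1.
  have := cardsC A; rewrite card_ord.
  have := Zg_skew_bound sym irr nbr x0; lia.
have [/existsP [u /forallP Hu]|/existsPn nex] :=
  boolP [exists u, [forall y, G u y ==> (y \in A)]].
  by apply: (one_missing (u := u) HS Ka) => // y h; have := Hu y; rewrite h inE.
exfalso.
case/card_gt1P: gt1 => g1 [g2 [g1A g2A g12]].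
have g1S : lshift r g1 \notin S by rewrite !inE in g1A.
have g2S : lshift r g2 \notin S by rewrite !inE in g2A.
have st : stalled true J S.
  move=> u w _; case: (split_ordP u) => [x ->|k ->].
    have := nex x; rewrite negb_forall => /existsP [y].
    rewrite negb_imply => /andP [xy yA].
    apply: (not_single (a := rshift n a) (b := lshift r y)).
    - by refine (white_rK _ aS); rewrite eq_lrshift.
    - by refine (white_LL xy _); rewrite inE in yA.
    - by rewrite eq_rlshift.
  case: (k =P a) => [->|/eqP ka].
    apply: (not_single (a := lshift r g1) (b := lshift r g2)).
    - exact: white_rL.
    - exact: white_rL.
    - by rewrite eq_lshift.
  apply: (not_single (a := rshift n a) (b := lshift r g1)).
  - by refine (white_rK _ aS); rewrite eq_rshift.
  - exact: white_rL.
  - by rewrite eq_rlshift.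
by have := HS S (subxx S) st => ST; rewrite ST inE in aS.
Qed.
End Lower.

Lemma conn_nbr n (G : rel 'I_n) : 1 < n -> connected_graph G ->
  forall x, exists y, G x y.
Proof.
move=> n1 c x.
pose z0 : 'I_n := Ordinal (ltnW n1); pose z1 : 'I_n := Ordinal n1.
have [y yx] : exists y : 'I_n, y != x.
  case: (x =P z0) => [->|/eqP xz]; last by exists z0; rewrite eq_sym.
  by exists z1; apply/eqP => /(congr1 val).
case/connectP: (c x y) => [[|z p]] /=; first by move=> _ E; rewrite E eqxx in yx.
by case/andP => xz _ _; exists z.
Qed.

Theorem proposition4p4 (n1 n2 : nat) (G1 : rel 'I_n1) (G2 : rel 'I_n2) :
  simple_graph G1 -> simple_graph G2 ->
  connected_graph G1 -> connected_graph G2 ->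
  L_cospectral G1 G2 ->
  (Z G1 <> Z G2 ->
     forall r : nat, 1 <= r ->
       L_cospectral (join_complete G1 r) (join_complete G2 r) /\
       Z (join_complete G1 r) <> Z (join_complete G2 r)) /\
  (Zskew G1 <> Zskew G2 ->
     forall r : nat, 1 <= r ->
       L_cospectral (join_complete G1 r) (join_complete G2 r) /\
       Zskew (join_complete G1 r) <> Zskew (join_complete G2 r)).
Proof.
move=> [sym1 irr1] [sym2 irr2] c1 c2 cosp.
have cosJ : forall r, L_cospectral (join_complete G1 r) (join_complete G2 r).
  by move=> r; apply: join_cospectral.
case: cosp => e12 _; subst n2.
have [le1|gt1] := leqP n1 1.
  have EG : G1 = G2.
    apply: functional_extensionality => x; apply: functional_extensionality => y.
    have xy : x = y by apply: ord_inj; have := ltn_ord x; have := ltn_ord y; lia.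
    by rewrite xy irr1 irr2.
  by subst G2.
have nbr1 := conn_nbr gt1 c1; have nbr2 := conn_nbr gt1 c2.
pose x0 : 'I_n1 := Ordinal (ltnW gt1).
have EZ : forall r (G : rel 'I_n1), symmetric G -> irreflexive G ->
    (forall x, exists y, G x y) ->
    Z (join_complete G r) = Z G + r /\ Zskew (join_complete G r) = Zskew G + r.
  move=> r G sG iG nG; rewrite !Z_Zg !Zskew_Zg; split; apply/eqP; rewrite eqn_leq Zg_upper /=.
    exact: (Zg_lower_std r sG iG nG x0).
  exact: (Zg_lower_skew r sG iG nG x0).
split=> HZ r r1; split=> //.
  have [-> _] := EZ r G1 sym1 irr1 nbr1; have [-> _] := EZ r G2 sym2 irr2 nbr2.
  by move/addIn.
have [_ ->] := EZ r G1 sym1 irr1 nbr1; have [_ ->] := EZ r G2 sym2 irr2 nbr2.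
by move/addIn.
Qed.
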